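(* Let $n\ge 1$, $N\ge 1$ be integers, $p\in(0,1)$, and let $I:\{0,1\}^n\to\{0,1\}$ be a decoding-error indicator with error-correcting capability $t$ (an integer $0\le t<n$ such that $I(\mathbf z)=0$ whenever $wt(\mathbf z)\le t$). For $q\in(0,1)$ let $\hat P_{IS}(e;q)=\frac1N\sum_{j=1}^N I(\mathbf z_j)W(wt(\mathbf z_j);p,q)$ with $\mathbf z_1,\dots,\mathbf z_N$ i.i.d. with pmf $f(\mathbf z;q)=q^{wt(\mathbf z)}(1-q)^{n-wt(\mathbf z)}$, and let $V(q)=\mathrm{var}_q[\hat P_{IS}(e;q)]$. Suppose $\sum_{i=t+1}^n P_p(e;i)>0$. Then the parameter $\hat q\in(0,1)$ that minimizes $V$ over $(0,1)$ satisfies $$\hat q=\frac1n\,\frac{\sum_{i=t+1}^{n} i\,W(i;p,\hat q)\,P_p(e;i)}{\sum_{i=t+1}^{n} W(i;p,\hat q)\,P_p(e;i)}.$$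
   Context: Setting: a linear block code of length $n$ is used over a binary symmetric channel (BSC) with cross-over probability $p$; w.l.o.g. the all-zero codeword is sent, so the channel output equals the error pattern $\mathbf z\in\{0,1\}^n$, whose bits are i.i.d. Bernoulli($p$). $wt(\mathbf z)$ is the number of ones in $\mathbf z$. $I(\mathbf z)=1$ if the decoder decodes $\mathbf z$ erroneously and $0$ otherwise; $t$ is the maximum number of errors the decoder always corrects. The weighting function is $W(i;p,q)=\frac{p^i(1-p)^{n-i}}{q^i(1-q)^{n-i}}$. $P_p(e;i)=\sum_{\mathbf z:\,wt(\mathbf z)=i} I(\mathbf z)\,p^i(1-p)^{n-i}$ is the joint probability that a decoding error occurs and the error pattern has weight $i$ on a BSC with parameter $p$. The word error rate is $P(e)=\sum_{\mathbf z}I(\mathbf z)p^{wt(\mathbf z)}(1-p)^{n-wt(\mathbf z)}$, and the variance is $V(q)=\frac1N\big(\mathbb E_q[I(\mathbf z)W^2(wt(\mathbf z);p,q)]-P(e)^2\big)$, where $\mathbb E_q$ is expectation under $f(\cdot;q)$. *)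

(* Defs.v *)
From HB Require Import structures.
From mathcomp Require Import all_boot all_order all_algebra.
From mathcomp Require Import all_classical all_reals.
Set Implicit Arguments. Unset Strict Implicit. Unset Printing Implicit Defensive.
Import Order.TTheory GRing.Theory Num.Theory.
Local Open Scope ring_scope.

(* Error patterns z in {0,1}^n are finite functions 'I_n -> bool. *)
Definition wt (n : nat) (z : {ffun 'I_n -> bool}) : nat := (\sum_(k < n) z k)%N.

Section Defs.
Variables (R : realType) (n : nat).

(* Probability of a fixed pattern of weight i on a BSC(p). *)
Definition bsc (p : R) (i : nat) : R := p ^+ i * (1 - p) ^+ (n - i).

Definition fpmf (q : R) (z : {ffun 'I_n -> bool}) : R := bsc q (wt z).

Definition W (i : nat) (p q : R) : R := bsc p i / bsc q i.

Definition Pei (I : {ffun 'I_n -> bool} -> bool) (p : R) (i : nat) : R :=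
  \sum_(z : {ffun 'I_n -> bool} | wt z == i) (I z)%:R * bsc p i.

Definition Pe (I : {ffun 'I_n -> bool} -> bool) (p : R) : R :=
  \sum_(z : {ffun 'I_n -> bool}) (I z)%:R * fpmf p z.

Definition Vis (N : nat) (I : {ffun 'I_n -> bool} -> bool) (p q : R) : R :=
  N%:R^-1 * (\sum_(z : {ffun 'I_n -> bool}) (I z)%:R * (W (wt z) p q) ^+ 2 * fpmf q z
             - (Pe I p) ^+ 2).

End Defs.

(* Main.v *)
Require Import Defs.
From HB Require Import structures.
From mathcomp Require Import all_boot all_order all_algebra.
From mathcomp Require Import all_classical all_reals all_analysis.
From mathcomp Require Import ring lra.
Import Order.TTheory GRing.Theory Num.Theory.
Local Open Scope ring_scope.

Lemma expr_pred_mul (R : realType) (k : nat) (x : R) :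
  k%:R * x ^+ k.-1 * x = k%:R * x ^+ k.
Proof. by case: k => [|k]; rewrite ?mul0r //= exprS (mulrC x) -mulrA. Qed.

Lemma bsc_gt0 (R : realType) n k (q : R) : 0 < q < 1 -> 0 < bsc n q k.
Proof.
case/andP=> q0 q1; rewrite /bsc mulr_gt0 // exprn_gt0 // subr_gt0 //.
Qed.

Lemma dbsc (R : realType) n k (q : R) : (k <= n)%N -> 0 < q < 1 ->
  is_derive q 1 (fun y : R => (bsc n y k)^-1)
    ((n%:R * q - k%:R) / (q * (1 - q)) * (bsc n q k)^-1).
Proof.
move=> kn qI.
have h1 := @is_deriveX R R^o id k q 1 1 (is_derive_id _ _).
have h2 := @is_deriveX R R^o (cst 1 - id) (n - k) q 1 (0 - 1)
   (is_deriveB (is_derive_cst _ _ _) (is_derive_id _ _)).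
have h3 := is_deriveM h1 h2.
have e : (id ^+ k * (cst 1 - id) ^+ (n - k) : R^o -> R^o) q = bsc n q k.
  by rewrite /bsc !fctE.
have hq := @bsc_gt0 R n k q qI.
have hv := is_deriveV (f := (id ^+ k * (cst 1 - id) ^+ (n - k) : R^o -> R^o)) _ h3.
rewrite e in hv.
have -> : (fun y : R => (bsc n y k)^-1) =
   (fun y => ((id ^+ k * (cst 1 - id) ^+ (n - k) : R^o -> R^o) y)^-1).
  by apply/funext => y; rewrite /bsc !fctE.
have hv2 := hv (lt0r_neq0 hq). eapply is_derive_eq. exact: hv2.
case/andP: qI => q0 q1.
have q10 : 1 - q != 0 by rewrite subr_eq0 eq_sym lt_eqF.
rewrite !fctE /=.
rewrite /GRing.scale /=.
have hA := @expr_pred_mul R k q.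
have hB := @expr_pred_mul R (n - k) (1 - q).
move: hA hB hq; rewrite /bsc.
set A := q ^+ k; set B := (1 - q) ^+ (n - k).
set a := k%:R * q ^+ k.-1; set b := (n - k)%:R * (1 - q) ^+ (n - k).-1.
move=> hA hB hq.
have qq : q * (1 - q) != 0 by rewrite mulf_neq0 // lt0r_neq0.
have key : A * (b * (0 - 1)) + B * (a * 1) =
   A * B * (k%:R * (1 - q) - (n - k)%:R * q) / (q * (1 - q)).
  apply: (mulIf qq); rewrite mulfVK //.
  transitivity (- (A * q) * (b * (1 - q)) + (B * (1 - q)) * (a * q)); first by ring.
  rewrite hA hB; ring.
rewrite key natrB //.
have AB : A * B != 0 by apply: lt0r_neq0.
field.
move: AB; rewrite mulf_eq0 negb_or => /andP[-> ->]; by rewrite q10 lt0r_neq0.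
Qed.

Lemma wt_le n (z : {ffun 'I_n -> bool}) : (wt z <= n)%N.
Proof.
rewrite /wt; apply: (@leq_trans (\sum_(k < n) 1)%N); first by apply: leq_sum => i _; exact: leq_b1.
by rewrite sum_nat_const card_ord muln1.
Qed.

Lemma part (R : realType) n t (F : {ffun 'I_n -> bool} -> R) : (t < n)%N ->
  (forall z, (wt z <= t)%N -> F z = 0) ->
  \sum_(t.+1 <= i < n.+1) \sum_(z | wt z == i) F z = \sum_z F z.
Proof.
move=> tn HF.
have -> : \sum_(t.+1 <= i < n.+1) \sum_(z | wt z == i) F z =
          \sum_(0 <= i < n.+1) \sum_(z | wt z == i) F z.
  rewrite [RHS](@big_cat_nat _ _ _ t.+1) //=; last by rewrite ltnS ltnW.
  rewrite [X in _ = X + _]big_nat_cond [X in _ = X + _]big1 ?add0r // => i /andP[/andP[_ hi] _].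
  by rewrite big1 // => z /eqP wz; apply: HF; rewrite wz -ltnS.
rewrite big_mkord (exchange_big_dep predT) //=.
apply: eq_bigr => z _.
rewrite (big_pred1 (inord (wt z))) // => i /=.
have hw : (wt z < n.+1)%N by rewrite ltnS wt_le.
apply/idP/idP => /eqP e.
  by apply/eqP; apply: val_inj; rewrite /= inordK.
by rewrite e inordK.
Qed.

Lemma is_derive_sumT (R : realType) (T : finType) (h : T -> R -> R) (x : R)
  (dh : T -> R) : (forall i, is_derive x 1 (h i : R^o -> R^o) (dh i)) ->
  is_derive x 1 ((fun y => \sum_i h i y) : R^o -> R^o) (\sum_i dh i).
Proof.
move=> H.
have : is_derive x 1 (\sum_i (h i : R^o -> R^o)) (\sum_i dh i).
  elim/big_ind2: _ => //; first exact: is_derive_cst.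
  by move=> f1 d1 f2 d2 h1 h2; exact: is_deriveD.
by rewrite fct_sumE.
Qed.

Theorem theorem1 (R : realType) (n N t : nat) (p : R)
    (I : {ffun 'I_n -> bool} -> bool) (qhat : R) :
  (1 <= n)%N -> (1 <= N)%N -> 0 < p < 1 ->
  (t < n)%N ->
  (forall z, (wt z <= t)%N -> I z = false) ->
  0 < \sum_(t.+1 <= i < n.+1) Pei I p i ->
  0 < qhat < 1 ->
  (forall q : R, 0 < q < 1 -> Vis N I p qhat <= Vis N I p q) ->
  qhat = n%:R^-1 *
    ((\sum_(t.+1 <= i < n.+1) i%:R * W n i p qhat * Pei I p i) /
     (\sum_(t.+1 <= i < n.+1) W n i p qhat * Pei I p i)).
Proof.
move=> n1 N1 pI tn It Ppos qI Vmin.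
pose c z := (I z)%:R * bsc n p (wt z) ^+ 2.
pose g := fun y : R => \sum_z c z * (bsc n y (wt z))^-1.
have Vg : forall q, 0 < q < 1 -> Vis N I p q = N%:R^-1 * (g q - (Pe I p) ^+ 2).
  move=> q qI'; rewrite /Vis /g; congr (_ * (_ - _)); apply: eq_bigr => z _.
  rewrite /W /fpmf /c; field.
  exact: lt0r_neq0 (@bsc_gt0 R n (wt z) q qI').
have gmin : forall q, q \in `]0, 1[ -> g qhat <= g q.
  move=> q; rewrite in_itv /= => qI'.
  have := Vmin q qI'; rewrite !Vg //.
  rewrite ler_pM2l ?invr_gt0 ?ltr0n // lerD2r //.
have dg : forall q : R, 0 < q < 1 -> is_derive (q : R^o) 1 (g : R^o -> R^o)
    (\sum_z c z * ((n%:R * q - (wt z)%:R) / (q * (1 - q)) * (bsc n q (wt z))^-1)).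
  move=> q qI'; apply: is_derive_sumT => z.
  have h := is_deriveZ (c z) (@dbsc R n (wt z) q (@wt_le n z) qI'). exact h.
have qin : qhat \in `]0, 1[ by rewrite in_itv.
have d0 : is_derive (qhat : R^o) 1 (g : R^o -> R^o) 0.
  apply: (@derive1_at_min R g 0 1 qhat ler01) => //.
  by move=> q0; rewrite in_itv /= => qq; case: (dg q0 qq).
have E1 := @derive_val _ _ _ _ _ _ _ (dg qhat qI).
have E2 := @derive_val _ _ _ _ _ _ _ d0.
rewrite E2 in E1.
pose u z := W n (wt z) p qhat * ((I z)%:R * bsc n p (wt z)).
have u0 : forall z, (wt z <= t)%N -> u z = 0.
  by move=> z hz; rewrite /u It // mul0r mulr0.
have hD : \sum_(t.+1 <= i < n.+1) W n i p qhat * Pei I p i = \sum_z u z.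
  rewrite -(@part R n t u tn u0).
  apply: eq_bigr => i _; rewrite /Pei mulr_sumr; apply: eq_bigr => z /eqP <-.
  by [].
have hN : \sum_(t.+1 <= i < n.+1) i%:R * W n i p qhat * Pei I p i =
          \sum_z (wt z)%:R * u z.
  rewrite -(@part R n t (fun z => (wt z)%:R * u z) tn); last first.
    by move=> z hz; rewrite u0 // mulr0.
  apply: eq_bigr => i _; rewrite /Pei mulr_sumr; apply: eq_bigr => z /eqP <-.
  by rewrite /u -mulrA.
have hP : \sum_(t.+1 <= i < n.+1) Pei I p i = \sum_z (I z)%:R * bsc n p (wt z).
  rewrite -(@part R n t (fun z => (I z)%:R * bsc n p (wt z)) tn); last first.
    by move=> z hz; rewrite It // mul0r.
  by apply: eq_bigr => i _; apply: eq_bigr => z /eqP <-.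
have Wpos : forall i, 0 < W n i p qhat.
  by move=> i; rewrite /W divr_gt0 // bsc_gt0.
have uge0 : forall z, 0 <= u z.
  move=> z; rewrite /u; apply: mulr_ge0; first exact: ltW.
  by apply: mulr_ge0; [exact: ler0n | exact: ltW (@bsc_gt0 R n (wt z) p pI)].
have S0ne : \sum_z u z != 0.
  apply/eqP => S0.
  have := psumr_eq0P (fun z _ => uge0 z) S0 => hz.
  move: Ppos; rewrite hP big1 ?ltxx // => z _.
  have := hz z isT; rewrite /u => /eqP; rewrite mulf_eq0 (negbTE (lt0r_neq0 (Wpos _))) /=.
  by move/eqP.
have qq : qhat * (1 - qhat) != 0.
  by case/andP: qI => q0 q1; rewrite mulf_neq0 // lt0r_neq0 // subr_gt0.
have key : \sum_z u z * (n%:R * qhat - (wt z)%:R) = 0.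
  apply: (mulIf (invr_neq0 qq)); rewrite mul0r [RHS]E1 mulr_suml.
  apply: eq_bigr => z _; rewrite /u /c /W; field.
  case/andP: (qI) => q0 q1.
  by rewrite !lt0r_neq0 ?bsc_gt0 ?subr_gt0.
have key2 : n%:R * qhat * \sum_z u z = \sum_z (wt z)%:R * u z.
  have e : \sum_z u z * (n%:R * qhat - (wt z)%:R) =
      n%:R * qhat * \sum_z u z - \sum_z (wt z)%:R * u z.
    by rewrite mulr_sumr -sumrB; apply: eq_bigr => z _; ring.
  by apply/eqP; rewrite -subr_eq0 -e key.
rewrite hD hN -key2.
have n0 : (n%:R : R) != 0 by rewrite pnatr_eq0 -lt0n.
by field; rewrite S0ne n0.
Qed.
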